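(* Let $\Sigma$ be a non-orientable surface (possibly with boundary), let $D\subset\Sigma$ be a diagram of an oriented pseudo-classical knot in $\hat\Sigma=\Sigma\times[0,1]$, fix a labeling of its $2$-cabling $D^2$, and let $x$ be a crossing of $D$. (1) If $x$ is of type $1$, then each of the following transformations multiplies $\operatorname{sign}(x)$ by $-1$: (a) the crossing change operation at $x$; (b) reversing the orientation of $D$; (c) relabeling $D^2$. (2) If $x$ is of type $2$, then $\operatorname{sign}(x)$ is preserved under the crossing change operation at $x$, while relabeling $D^2$ and reversing the orientation of $D$ each multiply $\operatorname{sign}(x)$ by $-1$.
   Context: $\hat\Sigma=\Sigma\times[0,1]$ is the non-orientable $3$-manifold with fixed product structure; knots in it are represented by diagrams on $\Sigma$ (projections with over/under information at double points). A knot $K\subset\hat\Sigma$ is pseudo-classical if it is an orientation-preserving loop in $\hat\Sigma$ (equivalently its regular neighbourhood is a solid torus); then its diagram $D$ is an orientation-preserving loop in $\Sigma$. The $2$-cabling $D^2$ is the diagram obtained by replacing $D$ by two parallel copies (a doubled line) preserving over/under information at all crossings; for pseudo-classical $K$ it has two components. A labeling of $D^2$ is a choice of calling one component the ''right'' one $R(D)$ and the other the ''left'' one $L(D)$ (this is only a naming, since $\Sigma$ has no orientation); relabeling swaps the names. Both components are oriented consistently with $D$. Each crossing $x$ of $D$ gives a pattern of $4$ crossings of $D^2$; the input crossing $\mathrm{In}(x)$ is the crossing of the pattern at which both strands of $D^2$ passing through it enter the pattern (the first crossing of the pattern on both strands, traversed in the positive direction); the output crossing is defined analogously with ''leave''.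 The sign of $x$ is $\operatorname{sign}(x)=1$ if $R(D)$ goes over $L(D)$ at $\mathrm{In}(x)$; $-1$ if $L(D)$ goes over $R(D)$ at $\mathrm{In}(x)$; $i$ if $R(D)$ goes over itself at $\mathrm{In}(x)$; $-i$ if $L(D)$ goes over itself at $\mathrm{In}(x)$ ($i$ the imaginary unit). The crossing $x$ is of type $1$ if $\mathrm{In}(x)$ is an intersection of two distinct components of $D^2$ (i.e. $\operatorname{sign}(x)=\pm1$), and of type $2$ otherwise ($\operatorname{sign}(x)=\pm i$). The crossing change at $x$ swaps over- and under-branches at $x$ leaving the rest of the diagram unchanged. *)

(* Defs.v *)
(* Combinatorial model of an oriented knot diagram on a
   surface (signed Gauss code with twist bits), its labeled 2-cabling,
   and the sign of a crossing. *)
From mathcomp Require Import all_boot all_order all_algebra all_field.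
Set Implicit Arguments.
Unset Strict Implicit.
Unset Printing Implicit Defensive.
Import Order.TTheory GRing.Theory Num.Theory.

(* A pass of the oriented curve D through a crossing:
   (crossing, this pass is the over-branch?, twist bit of the arc of D
   leaving this pass towards the next pass).  The twist bit is [true] iff
   transporting the local orientation (chosen once and for all in a small
   disk around each crossing) along that arc reverses it. *)
Definition pass (n : nat) := ('I_n * bool * bool)%type.

Definition pcross n (p : pass n) : 'I_n := p.1.1.
Definition pover n (p : pass n) : bool := p.1.2.
Definition ptwist n (p : pass n) : bool := p.2.

(* A diagram with n crossings: the cyclic sequence of passes met when
   traversing D in its positive direction, and for each crossing x the
   local writhe [writhe x] = (sign of (d_over x d_under) w.r.t. the chosen
   local orientation at x == +1). *)
Record diagram (n : nat) := Diagram {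
  passes : seq (pass n);
  writhe : 'I_n -> bool
}.

Definition wf_diagram n (D : diagram n) : Prop :=
  forall x : 'I_n,
    count (fun p => (pcross p == x) && pover p) (passes D) = 1%N /\
    count (fun p => (pcross p == x) && ~~ pover p) (passes D) = 1%N.

(* D is an orientation-preserving loop in Sigma. *)
Definition pseudo_classical n (D : diagram n) : Prop :=
  ~~ odd (count (@ptwist n) (passes D)).

(* A labeling of D^2: for each pass i, [nth false l i] says whether the
   component R(D) of the 2-cabling is the strand on the left of D there
   (left w.r.t. the direction of D and the local orientation at the
   crossing). *)
Definition labeling n (D : diagram n) (l : seq bool) : Prop :=
  size l = size (passes D) /\
  forall i, (i < size (passes D))%N ->
    nth false l (i.+1 %% size (passes D)) =
      (nth false l i (+) nth false (map (@ptwist n) (passes D)) i).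

Definition relabel (l : seq bool) : seq bool := map negb l.

(* Crossing change at x: swap over/under at x.  The local writhe
   sign(d_over x d_under) changes sign; the components of D^2 (as sets)
   and hence the labeling are unchanged. *)
Definition crossing_change n (D : diagram n) (x : 'I_n) : diagram n :=
  Diagram [seq if pcross p == x then (pcross p, ~~ pover p, ptwist p) else p
          | p <- passes D]
          (fun y => if y == x then ~~ writhe D y else writhe D y).

(* Reversing the orientation of D: passes are met in reverse order; the
   arc leaving pass i in the new direction is the arc entering it in the
   old one.  Both branch directions at a crossing flip, so the local
   writhe is unchanged. *)
Definition reverse n (D : diagram n) : diagram n :=
  Diagram (rev (zip (unzip1 (passes D)) (rotr 1 (unzip2 (passes D)))))
          (writhe D).

(* The same labeling (R stays R) seen on the reversed diagram: the pass
   order is reversed and left/right w.r.t. the direction of D swap. *)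
Definition reverse_lab (l : seq bool) : seq bool := rev (map negb l).

Definition over_pass n (D : diagram n) (x : 'I_n) : nat :=
  find (fun p => (pcross p == x) && pover p) (passes D).
Definition under_pass n (D : diagram n) (x : 'I_n) : nat :=
  find (fun p => (pcross p == x) && ~~ pover p) (passes D).

(* In a local frame at x with the over branch directed along +e1 and the
   under branch along s*e2 (s = local writhe), the four crossings of the
   pattern are (+-d, +-d) and In(x) = (-d, -s d).  It lies on the
   over-strand y = -s d (the left one iff s = -1) and the under-strand
   x = -d (the left one iff s = +1).
   [in_over_R]  : the over strand at In(x) belongs to R(D);
   [in_under_R] : the under strand at In(x) belongs to R(D). *)
Definition in_over_R n (D : diagram n) (l : seq bool) (x : 'I_n) : bool :=
  nth false l (over_pass D x) == ~~ writhe D x.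
Definition in_under_R n (D : diagram n) (l : seq bool) (x : 'I_n) : bool :=
  nth false l (under_pass D x) == writhe D x.

(* x is of type 1 iff In(x) is an intersection of distinct components. *)
Definition type1 n (D : diagram n) (l : seq bool) (x : 'I_n) : bool :=
  in_over_R D l x != in_under_R D l x.

Definition sign n (D : diagram n) (l : seq bool) (x : 'I_n) : algC :=
  if type1 D l x then
    (if in_over_R D l x then 1 else -1)%R
  else
    (if in_over_R D l x then 'i else - 'i)%R.

(* Main.v *)
Require Import Defs.
From mathcomp Require Import all_boot all_order all_algebra all_field.
From mathcomp Require Import zify.
Import Order.TTheory GRing.Theory Num.Theory.

Lemma uniq_find T (x0 : T) (a : pred T) s i :
  count a s = 1%N -> (i < size s)%N -> a (nth x0 s i) -> i = find a s.
Proof.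
elim: s i => [|y s IH] i //=; case: i => [|i] /=.
- by move=> _ _ ->.
- case ay: (a y) => /= Hc Hi Ha.
  + have : has a s by apply/(has_nthP x0); exists i.
    by rewrite has_count; move: Hc; rewrite add1n => -[->].
  + by rewrite (IH i) //; move: Hc; rewrite add0n.
Qed.

Lemma find_rev1 T (a : pred T) s :
  count a s = 1%N -> find a (rev s) = (size s - (find a s).+1)%N.
Proof.
case: s => [|x0 s0] // Hc; set s := x0 :: s0 in Hc *.
have Hf : (find a s < size s)%N by rewrite -has_find has_count Hc.
symmetry; apply: (@uniq_find _ x0 a (rev s)).
- by rewrite count_rev.
- by rewrite size_rev; move: Hf; clear; case: (size s) => //= m Hf; rewrite subSS; lia.
- rewrite nth_rev; last by move: Hf; clear; case: (size s) => //= m Hf; rewrite subSS; lia.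
  have -> : (size s - (size s - (find a s).+1).+1 = find a s)%N by lia.
  by apply: nth_find; rewrite has_count Hc.
Qed.

Definition sgn (A B : bool) : algC :=
  if A != B then (if A then 1 else -1)%R else (if A then 'i else - 'i)%R.

Lemma signE n (D : diagram n) l x : sign D l x = sgn (in_over_R D l x) (in_under_R D l x).
Proof. by []. Qed.

Lemma sgnN A B : sgn (~~ A) (~~ B) = (- sgn A B)%R.
Proof. by case: A; case: B; rewrite /sgn /= ?opprK. Qed.

Lemma sgnC1 A B : A != B -> sgn B A = (- sgn A B)%R.
Proof. by case: A; case: B; rewrite /sgn /= ?opprK. Qed.

Lemma sgnC2 A B : ~~ (A != B) -> sgn B A = sgn A B.
Proof. by case: A; case: B. Qed.

Section S.
Variables (n : nat) (D : diagram n) (x : 'I_n).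
Definition PO := fun c : 'I_n * bool => (c.1 == x) && c.2.
Definition PU := fun c : 'I_n * bool => (c.1 == x) && ~~ c.2.

Lemma over_passE (E : diagram n) : over_pass E x = find PO (unzip1 (passes E)).
Proof. by rewrite /over_pass find_map; apply: eq_find => -[[c o] t]. Qed.
Lemma under_passE (E : diagram n) : under_pass E x = find PU (unzip1 (passes E)).
Proof. by rewrite /under_pass find_map; apply: eq_find => -[[c o] t]. Qed.

Lemma cc_over : over_pass (crossing_change D x) x = under_pass D x.
Proof.
rewrite /over_pass /under_pass /= find_map; apply: eq_find => -[[c o] t].
by rewrite /preim /pcross /pover /=; case: (c =P x) => [->|H] /=; rewrite ?eqxx //; case: eqP.
Qed.
Lemma cc_under : under_pass (crossing_change D x) x = over_pass D x.
Proof.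
rewrite /over_pass /under_pass /= find_map; apply: eq_find => -[[c o] t].
by rewrite /preim /pcross /pover /=; case: (c =P x) => [->|H] /=; rewrite ?eqxx ?negbK //; case: eqP.
Qed.

Lemma rev_unzip1 : unzip1 (passes (reverse D)) = rev (unzip1 (passes D)).
Proof. rewrite [passes (reverse D)]/=. rewrite {1}/unzip1 map_rev -/(unzip1 _) unzip1_zip // size_rotr !size_map //. Qed.
End S.

Theorem lemma1 (n : nat) (D : diagram n) (l : seq bool) (x : 'I_n) :
  wf_diagram D -> pseudo_classical D -> labeling D l ->
  (type1 D l x ->
     [/\ sign (crossing_change D x) l x = (- sign D l x)%R,
         sign (reverse D) (reverse_lab l) x = (- sign D l x)%R &
         sign D (relabel l) x = (- sign D l x)%R]) /\
  (~~ type1 D l x ->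
     [/\ sign (crossing_change D x) l x = sign D l x,
         sign D (relabel l) x = (- sign D l x)%R &
         sign (reverse D) (reverse_lab l) x = (- sign D l x)%R]).
Proof.
move=> /(_ x) [HO HU] _ [Hsz _].
have cO : count (@PO n x) (unzip1 (passes D)) = 1%N.
  by rewrite count_map -HO; apply: eq_count => -[[c o] t].
have cU : count (@PU n x) (unzip1 (passes D)) = 1%N.
  by rewrite count_map -HU; apply: eq_count => -[[c o] t].
have oL : (over_pass D x < size l)%N.
  by rewrite Hsz over_passE -(size_map fst) -has_find has_count cO.
have uL : (under_pass D x < size l)%N.
  by rewrite Hsz under_passE -(size_map fst) -has_find has_count cU.
have Hrel : sign D (relabel l) x = (- sign D l x)%R.
  rewrite !signE -sgnN /in_over_R /in_under_R /relabel !(nth_map false) //.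
  by congr sgn; [case: (nth false l (over_pass D x)) | case: (nth false l (under_pass D x))]; case: (writhe D x).
have Hrev : sign (reverse D) (reverse_lab l) x = (- sign D l x)%R.
  rewrite !signE -sgnN /in_over_R /in_under_R /reverse_lab.
  rewrite over_passE under_passE rev_unzip1 !find_rev1 // size_map.
  rewrite -over_passE -under_passE -Hsz /=.
  have lo : (size l - (over_pass D x).+1 < size [seq ~~ i | i <- l])%N by rewrite size_map; lia.
  have lu : (size l - (under_pass D x).+1 < size [seq ~~ i | i <- l])%N by rewrite size_map; lia.
  rewrite (nth_rev _ lo) (nth_rev _ lu) size_map.
  have -> : (size l - (size l - (over_pass D x).+1).+1 = over_pass D x)%N by lia.
  have -> : (size l - (size l - (under_pass D x).+1).+1 = under_pass D x)%N by lia.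
  rewrite !(nth_map false) //.
  by congr sgn; [case: (nth false l (over_pass D x)) | case: (nth false l (under_pass D x))]; case: (writhe D x).
have Hcc : sign (crossing_change D x) l x = sgn (in_under_R D l x) (in_over_R D l x).
  rewrite signE /in_over_R /in_under_R cc_over cc_under /= eqxx negbK.
  by [].
rewrite /type1; split=> Ht; split => //; rewrite Hcc signE.
- exact: sgnC1.
- exact: sgnC2.
Qed.
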